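(* Consider a one-site PTM cascade with $n\ge1$ layers and positive total amounts. Let $r(s)=f_0(s)+f_1^Y(s)\in\mathbb{R}(s)$ and write $r=r_1/r_2$ in reduced form with $r_1,r_2\in\mathbb{R}[s]$. Then at every steady state, the value $s=S_n^1$ is a root of the nonzero univariate polynomial $P(s)=r_2(s)\,\overline{E}-r_1(s)$. Moreover, at every steady state all other concentrations are rational functions of $S_n^1$: $S_i^1=f_i(S_n^1)$ for $i=0,\dots,n-1$ (with $E=S_0^1$), $Y_i^0=f_i^Y(S_n^1)$, and $F_i=\frac{\overline{F}_i}{1+\delta_iS_i^1}$, $Y_i^1=\frac{\delta_i\overline{F}_iS_i^1}{1+\delta_iS_i^1}$, $S_i^0=\frac{\lambda_i\overline{F}_iS_i^1}{(1+\delta_iS_i^1)S_{i-1}^1}$, where all denominators occurring (in the recursive definition of $f_i,f_i^Y$ evaluated at $S_n^1$ and in these formulas) are nonzero.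
   Context: A one-site PTM cascade with $n$ layers has chemical species $E=S_0^1$ and, for $i=1,\dots,n$, $S_i^0,S_i^1,F_i,Y_i^0,Y_i^1$, with reactions $S_{i-1}^1+S_i^0 \rightleftharpoons Y_i^0 \to S_{i-1}^1+S_i^1$ (rate constants $a_i^0,b_i^0,c_i^0$) and $F_i+S_i^1\rightleftharpoons Y_i^1\to F_i+S_i^0$ (rate constants $a_i^1,b_i^1,c_i^1$), all positive, mass-action kinetics. Put $\delta_i=a_i^1/(b_i^1+c_i^1)$, $\gamma_i=(c_i^1/c_i^0)\delta_i$, $\lambda_i=\frac{b_i^0+c_i^0}{a_i^0}\gamma_i$. Given total amounts $\overline{E},\overline{F}_i,\overline{S}_i$, a steady state is a real solution of: $Y_i^0=\gamma_iF_iS_i^1$, $Y_i^1=\delta_iF_iS_i^1$, $\lambda_iF_iS_i^1=S_i^0S_{i-1}^1$, $\overline{F}_i=F_i+Y_i^1$, $\overline{S}_i=S_i^0+S_i^1+Y_i^0+Y_i^1+Y_{i+1}^0$ ($i=1,\dots,n$, $Y_{n+1}^0:=0$), $\overline{E}=E+Y_1^0$. Define for $i=1,\dots,n$ the polynomial $d_i(x,y)=(\overline{S}_i-y)-x-\overline{F}_i(\delta_i+\gamma_i)x+\delta_i(\overline{S}_i-y)x-\delta_ix^2$ and $g_i^Y(x)=\frac{\gamma_i\overline{F}_ix}{1+\delta_ix}$. Define rational functions of one variable $s$ recursively: $f_n(s)=s$, $f_{n+1}^Y(s)=0$, and for $i=n,n-1,\dots,1$: $f_i^Y(s)=g_i^Y(f_i(s))$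 and $f_{i-1}(s)=\frac{\lambda_i\overline{F}_if_i(s)}{d_i(f_i(s),f_{i+1}^Y(s))}$. *)

(* Defs.v *)
From HB Require Import structures.
From mathcomp Require Import all_boot all_order all_algebra.
Set Implicit Arguments. Unset Strict Implicit. Unset Printing Implicit Defensive.
Import Order.TTheory GRing.Theory Num.Theory.
Local Open Scope ring_scope.

(* One-site PTM cascade with n layers.  Layer-indexed data are functions
   nat -> R; only the values at i = 1..n matter. *)
Section Cascade.
Variables (R : realFieldType) (n : nat).
Variables (a0 b0 c0 a1 b1 c1 : nat -> R) (Fbar Sbar : nat -> R).

Definition delta (i : nat) : R := a1 i / (b1 i + c1 i).
Definition gamma (i : nat) : R := (c1 i / c0 i) * delta i.
Definition lambda (i : nat) : R := (b0 i + c0 i) / a0 i * gamma i.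

(* Generic evaluation of the recursion in any field K into which the
   real constants are mapped by k (K = R with k = id : pointwise values;
   K = R(s) with k = constant rational functions : rational functions). *)
Section Recursion.
Variables (K : fieldType) (k : R -> K).

Definition dpoly (i : nat) (x y : K) : K :=
  (k (Sbar i) - y) - x - k (Fbar i) * (k (delta i) + k (gamma i)) * x
  + k (delta i) * (k (Sbar i) - y) * x - k (delta i) * x ^+ 2.

Definition gY (i : nat) (x : K) : K :=
  k (gamma i) * k (Fbar i) * x / (1 + k (delta i) * x).

(* cstate s m = (f_{n-m}(s), f^Y_{n-m+1}(s)) for m <= n *)
Fixpoint cstate (s : K) (m : nat) : K * K :=
  match m with
  | 0 => (s, 0)
  | m'.+1 =>
      let i := (n - m')%N in
      let p := cstate s m' in
      (k (lambda i) * k (Fbar i) * p.1 / dpoly i p.1 p.2, gY i p.1)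
  end.

Definition fcas (i : nat) (s : K) : K := (cstate s (n - i)).1.
Definition fYcas (i : nat) (s : K) : K :=
  if (n < i)%N then 0 else (cstate s (n - i).+1).2.

End Recursion.

Definition ratfun_r : {fraction {poly R}} :=
  let k := fun c : R => FracField.tofrac (c%:P) in
  let s := FracField.tofrac ('X : {poly R}) in
  fcas k 0 s + fYcas k 1 s.

Definition fval (i : nat) (x : R) : R := fcas id i x.
Definition fYval (i : nat) (x : R) : R := fYcas id i x.

(* Steady states: real solutions of the steady-state system;
   E = S1 0, and Y_{n+1}^0 := 0. *)
Definition steady_state (Ebar : R) (S0 S1 F Y0 Y1 : nat -> R) : Prop :=
  (forall i, (1 <= i <= n)%N ->
     [/\ Y0 i = gamma i * F i * S1 i,
         Y1 i = delta i * F i * S1 i,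
         lambda i * F i * S1 i = S0 i * S1 i.-1,
         Fbar i = F i + Y1 i &
         Sbar i = S0 i + S1 i + Y0 i + Y1 i + (if i == n then 0 else Y0 i.+1)])
  /\ Ebar = S1 0%N + Y0 1%N.

End Cascade.

(* Main.v *)
Require Import Defs.
From HB Require Import structures.
From mathcomp Require Import all_boot all_order all_algebra.
From Stdlib Require Import Ring.
Import Order.TTheory GRing.Theory Num.Theory.
Local Open Scope ring_scope.

Section Main.
Variable R : realFieldType.
Local Notation T := (GRing.PzSemiRing.sort (Num_RealField__to__GRing_PzSemiRing R)).
Definition radd (x y : T) : T := x + y.
Definition rmul (x y : T) : T := x * y.
Definition ropp (x : T) : T := - x.
Definition rsub (x y : T) : T := radd x (ropp y).
Definition rzero : T := 0.
Definition rone : T := 1.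
Lemma RthR : @ring_theory T rzero rone radd rmul rsub ropp eq.
Proof.
rewrite /rzero/rone/radd/rmul/rsub/ropp.
constructor=> //; [exact: add0r|exact: addrC|exact: addrA|exact: mul1r|exact: mulrC|exact: mulrA|exact: mulrDl|exact: subrr].
Qed.
Add Ring Rring : RthR.
Lemma raddE (x y : R) : x + y = radd x y. Proof. by []. Qed.
Lemma rmulE (x y : R) : x * y = rmul x y. Proof. by []. Qed.
Lemma roppE (x : R) : - x = ropp x. Proof. by []. Qed.
Lemma rzeroE : 0 = rzero :> R. Proof. by []. Qed.
Lemma roneE : 1 = rone :> R. Proof. by []. Qed.
Definition rhorn (p : {poly R}) (x : R) : R := p.[x].
Lemma rhornE (p : {poly R}) x : p.[x] = rhorn p x. Proof. by []. Qed.
Ltac rring := rewrite ?rhornE ?raddE ?rmulE ?roppE ?rzeroE ?roneE;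
  match goal with |- ?a = ?b => change (@eq T a b) end; ring.

Variables (n : nat) (a0 b0 c0 a1 b1 c1 : nat -> R) (Fbar Sbar : nat -> R).
Local Notation fc := (fcas n a0 b0 c0 a1 b1 c1 Fbar Sbar).
Local Notation fYc := (fYcas n a0 b0 c0 a1 b1 c1 Fbar Sbar).
Local Notation dp := (dpoly c0 a1 b1 c1 Fbar Sbar).
Local Notation gy := (gY c0 a1 b1 c1 Fbar).
Local Notation dl := (delta a1 b1 c1).
Local Notation gm := (gamma c0 a1 b1 c1).
Local Notation lm := (lambda a0 b0 c0 a1 b1 c1).

Lemma fc_n (K : fieldType) (k : R -> K) s : fc k n s = s.
Proof. by rewrite /fcas subnn. Qed.

Lemma fYc_top (K : fieldType) (k : R -> K) s : fYc k n.+1 s = 0.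
Proof. by rewrite /fYcas ltnSn. Qed.

Lemma fYc_step (K : fieldType) (k : R -> K) i s : (1 <= i <= n)%N ->
  fYc k i s = gy k i (fc k i s).
Proof.
case/andP=> i1 iN; rewrite /fYcas /fcas ltnNge iN /=.
by rewrite subKn.
Qed.

Lemma fc_step (K : fieldType) (k : R -> K) i s : (1 <= i <= n)%N ->
  fc k i.-1 s = k (lm i) * k (Fbar i) * fc k i s / dp k i (fc k i s) (fYc k i.+1 s).
Proof.
case/andP=> i1 iN; rewrite /fcas.
have -> : (n - i.-1 = (n - i).+1)%N by case: i i1 iN => // i _ iN; rewrite subnSK.
rewrite /= subKn //.
congr (_ / dp k i _ _).
case: (ltngtP i n) iN => // [iltn|->] _; last by rewrite subnn fYc_top.
rewrite /fYcas ltnNge iltn /=.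
by have -> : (n - i = (n - i.+1).+1)%N by rewrite subnSK.
Qed.

Local Notation KF := {fraction {poly R}}.
Local Notation tf := (@FracField.tofrac {poly R}).

Definition reg (a : R) (z : KF) (v : R) :=
  exists p q : {poly R}, [/\ q.[a] != 0, z = tf p / tf q & p.[a] = v * q.[a]].

Lemma tfM (p q : {poly R}) : tf (p * q) = tf p * tf q. Proof. exact: tofracM. Qed.
Lemma tfD (p q : {poly R}) : tf (p + q) = tf p + tf q. Proof. exact: tofracD. Qed.
Lemma tfN (p : {poly R}) : tf (- p) = - tf p. Proof. exact: tofracN. Qed.

Lemma tf_neq0 (q : {poly R}) a : q.[a] != 0 -> tf q != 0.
Proof.
move=> h; rewrite tofrac_eq0; apply: contra_neq h => ->; by rewrite horner0.
Qed.

Lemma regC a c : reg a (tf c%:P) c.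
Proof.
exists c%:P, 1; rewrite !hornerE oner_eq0 tofrac1 divr1.
by split; rewrite ?mulr1.
Qed.

Lemma reg1 a : reg a 1 1.
Proof. by exists 1, 1; rewrite tofrac1 divr1 !hornerE oner_eq0; split; rewrite ?mulr1. Qed.

Lemma reg0 a : reg a 0 0.
Proof. by exists 0, 1; rewrite tofrac0 mul0r !hornerE oner_eq0; split; rewrite ?mul0r. Qed.

Lemma regX a : reg a (tf 'X) a.
Proof. by exists 'X, 1; rewrite tofrac1 divr1 !hornerE oner_eq0; split; rewrite ?mulr1. Qed.

Lemma regD a z w v u : reg a z v -> reg a w u -> reg a (z + w) (v + u).
Proof.
move=> [p1 [q1 [h1 -> e1]]] [p2 [q2 [h2 -> e2]]].
exists (p1 * q2 + p2 * q1), (q1 * q2); split.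
- by rewrite hornerM mulf_neq0.
- rewrite addf_div; [|exact: tf_neq0 h1|exact: tf_neq0 h2]; by rewrite tfD !tfM.
- rewrite hornerD !hornerM e1 e2; rring.
Qed.

Lemma regN a z v : reg a z v -> reg a (- z) (- v).
Proof.
move=> [p [q [h -> e]]]; exists (- p), q; split => //.
- by rewrite tfN mulNr.
- rewrite hornerN e; rring.
Qed.

Lemma regM a z w v u : reg a z v -> reg a w u -> reg a (z * w) (v * u).
Proof.
move=> [p1 [q1 [h1 -> e1]]] [p2 [q2 [h2 -> e2]]].
exists (p1 * p2), (q1 * q2); split.
- by rewrite hornerM mulf_neq0.
- by rewrite mulf_div !tfM.
- rewrite !hornerM e1 e2; rring.
Qed.

Lemma regV a z v : v != 0 -> reg a z v -> reg a z^-1 v^-1.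
Proof.
move=> hv [p [q [h -> e]]]; exists q, p; split.
- by rewrite e mulf_neq0.
- by rewrite invf_div.
- by rewrite e mulrA mulVf // mul1r.
Qed.

Lemma reg_ext (r1 r2 : {poly R}) a z v : reg a z v -> z = tf r1 / tf r2 -> r2 != 0 ->
  exists p q : {poly R}, [/\ q.[a] != 0, p.[a] = v * q.[a] & p * r2 = r1 * q].
Proof.
move=> [p [q [h -> e]]] E r2n; exists p, q; split => //.
apply/eqP; rewrite -tofrac_eq !tfM; apply/eqP.
have q0 : tf q != 0 by apply: tf_neq0 h.
have r0 : tf r2 != 0 by move: (@tofrac_eq0 {poly R} r2) => ->.
have H1 : tf p / tf q * (tf q * tf r2) = tf p * tf r2 by rewrite mulrA (divfK q0).
have H2 : tf r1 / tf r2 * (tf q * tf r2) = tf r1 * tf q by rewrite [tf q * _]mulrC mulrA (divfK r0).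
by rewrite -H1 -H2 E.
Qed.

Local Notation kf := (fun c : R => tf c%:P).
Local Notation sX := (tf 'X).

Ltac regt := repeat first [apply: regD | apply: regN | apply: regM | apply: regC | apply: reg1 | eassumption].

Lemma reg_dp a i z w v u : reg a z v -> reg a w u -> reg a (dp kf i z w) (dp id i v u).
Proof. move=> hz hw; rewrite /dpoly !expr2; regt. Qed.

Lemma reg_gy a i z v : reg a z v -> 1 + dl i * v != 0 -> reg a (gy kf i z) (gy id i v).
Proof. move=> hz nz; rewrite /gY; apply: regM; first regt. apply: regV => //; regt. Qed.

Local Notation fv := (fval n a0 b0 c0 a1 b1 c1 Fbar Sbar).
Local Notation fYv := (fYval n a0 b0 c0 a1 b1 c1 Fbar Sbar).

Lemma reg_casc a :
  (forall i, (1 <= i <= n)%N -> 1 + dl i * fv i a != 0 /\ dp id i (fv i a) (fYv i.+1 a) != 0) ->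
  forall m, (m <= n)%N ->
  reg a (fc kf (n - m) sX) (fv (n - m) a) /\ reg a (fYc kf (n - m).+1 sX) (fYv (n - m).+1 a).
Proof.
move=> ND; elim=> [_|m IH mn].
  rewrite subn0 /fval /fYval !fc_n !fYc_top; split; [exact: regX | exact: reg0].
have [IH1 IH2] := IH (ltnW mn).
have i1 : (1 <= n - m <= n)%N by rewrite subn_gt0 mn leq_subr.
have [nz1 nz2] := ND _ i1.
have ep : (n - m.+1 = (n - m).-1)%N by rewrite subnS.
rewrite ep prednK ?subn_gt0 //.
rewrite /fval /fYval in IH1 IH2 nz1 nz2 *.
rewrite !fc_step // (fYc_step _ _ _ _ i1) (fYc_step _ _ _ _ i1).
split.
- apply: regM; first by regt.
  apply: regV => //; exact: reg_dp.
- exact: reg_gy.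
Qed.
Lemma ratfun_reg a :
  (forall i, (1 <= i <= n)%N -> 1 + dl i * fv i a != 0 /\ dp id i (fv i a) (fYv i.+1 a) != 0) ->
  reg a (ratfun_r n a0 b0 c0 a1 b1 c1 Fbar Sbar) (fv 0 a + fYv 1 a).
Proof.
move=> ND; have [h1 h2] := reg_casc _ ND _ (leqnn n).
rewrite subnn in h1 h2; exact: regD h1 h2.
Qed.

Lemma zero_casc m : (m <= n)%N -> fv (n - m) 0 = 0 /\ fYv (n - m).+1 0 = 0.
Proof.
elim: m => [_|m IH mn].
  by rewrite subn0 /fval /fYval fc_n fYc_top.
have [IH1 IH2] := IH (ltnW mn).
have i1 : (1 <= n - m <= n)%N by rewrite subn_gt0 mn leq_subr.
have ep : (n - m.+1 = (n - m).-1)%N by rewrite subnS.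
rewrite ep prednK ?subn_gt0 //.
rewrite /fval /fYval in IH1 IH2 *.
rewrite fc_step // (fYc_step _ _ _ _ i1) IH1 /gY.
by rewrite !mulr0 !mul0r.
Qed.

Lemma layer (Sb Fb d g l v u S0 S1' F Y0 Y1 : R) : Fb != 0 -> l != 0 -> v != 0 ->
  Y0 = g * F * v -> Y1 = d * F * v -> l * F * v = S0 * S1' -> Fb = F + Y1 ->
  Sb = S0 + v + Y0 + Y1 + u ->
  [/\ 1 + d * v != 0,
      (Sb - u) - v - Fb * (d + g) * v + d * (Sb - u) * v - d * v ^+ 2 != 0,
      S1' != 0,
      S1' = l * Fb * v / ((Sb - u) - v - Fb * (d + g) * v + d * (Sb - u) * v - d * v ^+ 2) &
      [/\ Y0 = g * Fb * v / (1 + d * v), F = Fb / (1 + d * v),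
          Y1 = d * Fb * v / (1 + d * v) & S0 = l * Fb * v / ((1 + d * v) * S1')]].
Proof.
move=> Fb0 l0 v0 eY0 eY1 e3 e4 e5.
have hF : Fb = F * (1 + d * v) by rewrite e4 eY1; rring.
have : F * (1 + d * v) != 0 by rewrite -hF.
rewrite mulf_eq0 negb_or => /andP [F0 w0].
have : S0 * S1' != 0 by rewrite -e3 !mulf_neq0.
rewrite mulf_eq0 negb_or => /andP [S00 S10].
set D := (Sb - u) - v - Fb * (d + g) * v + d * (Sb - u) * v - d * v ^+ 2.
have eD : D = S0 * (1 + d * v) by rewrite /D e5 hF eY0 eY1 !expr2; rring.
have D0 : D != 0 by rewrite eD mulf_neq0.
have eL : l * Fb * v = (l * F * v) * (1 + d * v) by rewrite hF; rring.
split => //.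
- rewrite eL e3 eD.
  rewrite (_ : S0 * S1' * (1 + d * v) = S1' * (S0 * (1 + d * v))); last by rring.
  by rewrite mulfK // mulf_neq0.
split.
- rewrite eY0 hF (_ : g * (F * (1 + d * v)) * v = (g * F * v) * (1 + d * v)); last by rring.
  by rewrite mulfK.
- by rewrite hF mulfK.
- rewrite eY1 hF (_ : d * (F * (1 + d * v)) * v = (d * F * v) * (1 + d * v)); last by rring.
  by rewrite mulfK.
- rewrite eL e3 (_ : S0 * S1' * (1 + d * v) = S0 * ((1 + d * v) * S1')); last by rring.
  by rewrite mulfK // mulf_neq0.
Qed.
Definition tl (Y0 : nat -> R) j := if j == n then 0 else Y0 j.+1.

Section SS.
Variable Ebar : R.
Hypothesis Hn : (1 <= n)%N.
Hypothesis Hpos : forall i, (1 <= i <= n)%N ->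
     [/\ 0 < a0 i, 0 < b0 i & 0 < c0 i] /\ [/\ 0 < a1 i, 0 < b1 i & 0 < c1 i].
Hypothesis HE : 0 < Ebar.
Hypothesis HFS : forall i, (1 <= i <= n)%N -> 0 < Fbar i /\ 0 < Sbar i.

Lemma pos_consts i : (1 <= i <= n)%N -> [/\ 0 < dl i, 0 < gm i & 0 < lm i].
Proof.
move=> /Hpos [[ha0 hb0 hc0] [ha1 hb1 hc1]].
have hd : 0 < dl i by rewrite /delta divr_gt0 // addr_gt0.
have hg : 0 < gm i by rewrite /gamma mulr_gt0 // divr_gt0.
split => //; by rewrite /lambda mulr_gt0 // divr_gt0 // addr_gt0.
Qed.

Variables (S0 S1 F Y0 Y1 : nat -> R).
Hypothesis Hss : steady_state n a0 b0 c0 a1 b1 c1 Fbar Sbar Ebar S0 S1 F Y0 Y1.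

Lemma ss_eqs i : (1 <= i <= n)%N ->
  [/\ Y0 i = gm i * F i * S1 i, Y1 i = dl i * F i * S1 i,
      lm i * F i * S1 i = S0 i * S1 i.-1, Fbar i = F i + Y1 i &
      Sbar i = S0 i + S1 i + Y0 i + Y1 i + tl Y0 i].
Proof. by case: Hss => H _ /H. Qed.

Lemma ss_nonzero : S1 n != 0.
Proof.
apply/negP => /eqP S1n.
have key : forall m, (m <= n)%N -> S1 (n - m)%N = 0 /\ tl Y0 (n - m)%N = 0.
  elim => [_|m IH mn]; first by rewrite subn0 S1n /tl eqxx.
  have [IH1 IH2] := IH (ltnW mn).
  have i1 : (1 <= n - m <= n)%N by rewrite subn_gt0 mn leq_subr.
  have [e1 e2 e3 e4 e5] := ss_eqs _ i1.
  have [_ hS] := HFS _ i1.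
  rewrite IH1 mulr0 in e1; rewrite IH1 mulr0 in e2; rewrite IH1 mulr0 in e3.
  rewrite IH1 IH2 e1 e2 !addr0 in e5.
  have ep : (n - m.+1 = (n - m).-1)%N by rewrite subnS.
  rewrite ep; split.
  - apply/eqP; move: e3 => /esym/eqP; rewrite mulf_eq0 -e5 => /orP [|//].
    by rewrite gt_eqF.
  - rewrite /tl prednK ?subn_gt0 // ifF ?e1 //.
    apply/negbTE; rewrite neq_ltn; apply/orP; left.
    by rewrite -ltnS prednK ?subn_gt0 // ltnS leq_subr.
have [h1 h2] := key n (leqnn n).
rewrite subnn in h1 h2.
case: Hss => _ HE'.
move: h2; rewrite /tl ifF; last by apply/negbTE; rewrite neq_ltn Hn.
move=> h2; move: HE; rewrite HE' h1 h2 addr0 ltxx //.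
Qed.

Local Notation x := (S1 n).

Lemma ss_main m : (m <= n)%N ->
  [/\ S1 (n - m)%N = fv (n - m) x, S1 (n - m)%N != 0 & tl Y0 (n - m)%N = fYv (n - m).+1 x].
Proof.
elim: m => [_|m IH mn].
  rewrite subn0 /fval /fYval fc_n fYc_top /tl eqxx; split => //; exact: ss_nonzero.
have [IH1 IH2 IH3] := IH (ltnW mn).
have i1 : (1 <= n - m <= n)%N by rewrite subn_gt0 mn leq_subr.
have [e1 e2 e3 e4 e5] := ss_eqs _ i1.
have [hF _] := HFS _ i1.
have [_ _ hl] := pos_consts _ i1.
have [nz1 nzD nzS eS [eY0 _ _ _]] :=
  layer _ _ _ _ _ _ _ _ _ _ _ _ (lt0r_neq0 hF) (lt0r_neq0 hl) IH2 e1 e2 e3 e4 e5.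
have ep : (n - m.+1 = (n - m).-1)%N by rewrite subnS.
rewrite ep; split => //.
- rewrite /fval fc_step //.
  rewrite -/(fval n a0 b0 c0 a1 b1 c1 Fbar Sbar (n - m) x) -IH1.
  rewrite -/(fYval n a0 b0 c0 a1 b1 c1 Fbar Sbar (n - m).+1 x) -IH3.
  exact: eS.
- rewrite /tl prednK ?subn_gt0 // ifF.
    rewrite eY0 /fYval (fYc_step _ _ _ _ i1).
    by rewrite -/(fval n a0 b0 c0 a1 b1 c1 Fbar Sbar (n - m) x) -IH1.
  apply/negbTE; rewrite neq_ltn; apply/orP; left.
  by rewrite -ltnS prednK ?subn_gt0 // ltnS leq_subr.
Qed.
End SS.
End Main.

Theorem mainTheorem2 (R : realFieldType) (n : nat)
  (a0 b0 c0 a1 b1 c1 : nat -> R) (Ebar : R) (Fbar Sbar : nat -> R) :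
  (1 <= n)%N ->
  (forall i, (1 <= i <= n)%N ->
     [/\ 0 < a0 i, 0 < b0 i & 0 < c0 i] /\ [/\ 0 < a1 i, 0 < b1 i & 0 < c1 i]) ->
  0 < Ebar ->
  (forall i, (1 <= i <= n)%N -> 0 < Fbar i /\ 0 < Sbar i) ->
  forall r1 r2 : {poly R},
    r2 != 0 -> coprimep r1 r2 ->
    ratfun_r n a0 b0 c0 a1 b1 c1 Fbar Sbar
      = FracField.tofrac r1 / FracField.tofrac r2 ->
    let P := r2 * Ebar%:P - r1 in
    P != 0 /\
    (forall S0 S1 F Y0 Y1 : nat -> R,
       steady_state n a0 b0 c0 a1 b1 c1 Fbar Sbar Ebar S0 S1 F Y0 Y1 ->
       let x := S1 n in
       let f i := fval n a0 b0 c0 a1 b1 c1 Fbar Sbar i x in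
       let fY i := fYval n a0 b0 c0 a1 b1 c1 Fbar Sbar i x in
       let dl := delta a1 b1 c1 in
       let lm := lambda a0 b0 c0 a1 b1 c1 in
       P.[x] = 0 /\
       (forall i, (i < n)%N -> S1 i = f i) /\
       (forall i, (1 <= i <= n)%N ->
          [/\ 1 + dl i * f i != 0,
              dpoly c0 a1 b1 c1 Fbar Sbar id i (f i) (fY i.+1) != 0,
              1 + dl i * S1 i != 0,
              S1 i.-1 != 0 &
              [/\ Y0 i = fY i,
                  F i = Fbar i / (1 + dl i * S1 i),
                  Y1 i = dl i * Fbar i * S1 i / (1 + dl i * S1 i) &
                  S0 i = lm i * Fbar i * S1 i / ((1 + dl i * S1 i) * S1 i.-1)]])).
Proof.
move=> Hn Hpos HE HFS r1 r2 r2n _ Er P.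
have ND0 : forall i, (1 <= i <= n)%N ->
  1 + delta a1 b1 c1 i * fval n a0 b0 c0 a1 b1 c1 Fbar Sbar i 0 != 0 /\
  dpoly c0 a1 b1 c1 Fbar Sbar id i (fval n a0 b0 c0 a1 b1 c1 Fbar Sbar i 0)
     (fYval n a0 b0 c0 a1 b1 c1 Fbar Sbar i.+1 0) != 0.
  move=> i iin; have /andP [i1 iN] := iin.
  have [h1 h2] := zero_casc R n a0 b0 c0 a1 b1 c1 Fbar Sbar (n - i) (leq_subr i n).
  rewrite subKn // in h1 h2.
  rewrite h1 h2 mulr0 addr0 oner_eq0; split => //.
  rewrite /dpoly expr2 !mulr0 !subr0 addr0.
  have [_ hS] := HFS i iin.
  exact: lt0r_neq0.
split.
  apply/negP => /eqP /subr0_eq e.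
  have [p [q [q0 pe epr]]] := reg_ext R r1 r2 0 _ _
     (ratfun_reg R n a0 b0 c0 a1 b1 c1 Fbar Sbar 0 ND0) Er r2n.
  have [z1 z2] := zero_casc R n a0 b0 c0 a1 b1 c1 Fbar Sbar n (leqnn n).
  rewrite subnn in z1 z2.
  rewrite z1 z2 addr0 mul0r in pe.
  rewrite -e in epr.
  have ep : p = Ebar%:P * q.
    apply: (mulIf r2n); rewrite epr -mulrA mulrC; done.
  move: pe; rewrite ep hornerM hornerC => /eqP.
  by rewrite mulf_eq0 (negbTE q0) orbF (negbTE (lt0r_neq0 HE)).
move=> S0 S1 F Y0 Y1 Hss.
have SSM : forall j, (j <= n)%N ->
   [/\ S1 j = fval n a0 b0 c0 a1 b1 c1 Fbar Sbar j (S1 n), S1 j != 0 &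
       tl R n Y0 j = fYval n a0 b0 c0 a1 b1 c1 Fbar Sbar j.+1 (S1 n)].
  move=> j jn.
  have := ss_main R n a0 b0 c0 a1 b1 c1 Fbar Sbar Ebar Hn Hpos HE HFS S0 S1 F Y0 Y1 Hss
    (n - j) (leq_subr j n).
  by rewrite subKn.
have PERI : forall i, (1 <= i <= n)%N ->
  [/\ 1 + delta a1 b1 c1 i * fval n a0 b0 c0 a1 b1 c1 Fbar Sbar i (S1 n) != 0,
      dpoly c0 a1 b1 c1 Fbar Sbar id i (fval n a0 b0 c0 a1 b1 c1 Fbar Sbar i (S1 n))
        (fYval n a0 b0 c0 a1 b1 c1 Fbar Sbar i.+1 (S1 n)) != 0,
      1 + delta a1 b1 c1 i * S1 i != 0,
      S1 i.-1 != 0 &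
      [/\ Y0 i = fYval n a0 b0 c0 a1 b1 c1 Fbar Sbar i (S1 n),
          F i = Fbar i / (1 + delta a1 b1 c1 i * S1 i),
          Y1 i = delta a1 b1 c1 i * Fbar i * S1 i / (1 + delta a1 b1 c1 i * S1 i) &
          S0 i = lambda a0 b0 c0 a1 b1 c1 i * Fbar i * S1 i /
                   ((1 + delta a1 b1 c1 i * S1 i) * S1 i.-1)]].
  move=> i iin; have /andP [i1 iN] := iin.
  have [e1 e2 e3 e4 e5] := ss_eqs R n a0 b0 c0 a1 b1 c1 Fbar Sbar Ebar S0 S1 F Y0 Y1 Hss i iin.
  have [hF _] := HFS i iin.
  have [_ _ hl] := pos_consts R n a0 b0 c0 a1 b1 c1 Hpos i iin.
  have [s1 s2 s3] := SSM i iN.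
  have [nz1 nzD nzS eS [eY0 eF eY1 eS0]] :=
    layer R _ _ _ _ _ _ _ _ _ _ _ _ (lt0r_neq0 hF) (lt0r_neq0 hl) s2 e1 e2 e3 e4 e5.
  rewrite /fYval (fYc_step R n a0 b0 c0 a1 b1 c1 Fbar Sbar _ _ i _ iin).
  rewrite -/(fval n a0 b0 c0 a1 b1 c1 Fbar Sbar i (S1 n)) -s1 -/(fYval n a0 b0 c0 a1 b1 c1 Fbar Sbar i.+1 (S1 n)) -s3.
  split => //.
have NDx : forall i, (1 <= i <= n)%N ->
  1 + delta a1 b1 c1 i * fval n a0 b0 c0 a1 b1 c1 Fbar Sbar i (S1 n) != 0 /\
  dpoly c0 a1 b1 c1 Fbar Sbar id i (fval n a0 b0 c0 a1 b1 c1 Fbar Sbar i (S1 n))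
     (fYval n a0 b0 c0 a1 b1 c1 Fbar Sbar i.+1 (S1 n)) != 0.
  by move=> i /PERI [].
have hv : fval n a0 b0 c0 a1 b1 c1 Fbar Sbar 0 (S1 n)
          + fYval n a0 b0 c0 a1 b1 c1 Fbar Sbar 1 (S1 n) = Ebar.
  have [s1 _ s3] := SSM 0%N (leq0n n).
  rewrite -s1 -s3 /tl ifF; last by apply/negbTE; rewrite neq_ltn Hn.
  by case: Hss.
split; last first.
  split.
    by move=> i iN; have [] := SSM i (ltnW iN).
  exact: PERI.
have [p [q [q0 pe epr]]] := reg_ext R r1 r2 (S1 n) _ _
   (ratfun_reg R n a0 b0 c0 a1 b1 c1 Fbar Sbar (S1 n) NDx) Er r2n.
rewrite hv in pe.
have h := congr1 (fun t => t.[S1 n]) epr; rewrite /= !hornerM pe in h.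
have h1 : r1.[S1 n] = Ebar * r2.[S1 n].
  apply: (mulIf q0); by rewrite -h mulrAC.
by rewrite /P hornerD hornerN hornerM hornerC h1 mulrC subrr.
Qed.
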